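(* For every integer $n\ge1$, the class $\mathsf{uSL}_n$ is the logical class generated by the single structure $\mathbf{B}_n=\langle\mathbf{2}^n,P_n\rangle$, where $\mathbf{2}^n$ (the Boolean lattice with $n$ atoms) is regarded as a unital meet semilattice and $P_n$ is its set of non-zero elements. Likewise, $\mathsf{uSL}_\infty$ is the logical class generated by $\{\mathbf{B}_n: n\ge1\}$.
   Context: A unital meet semilattice is an algebra $\langle S,\wedge,1\rangle$ where $\wedge$ is a semilattice operation and $1$ is the top element. Structures are pairs $\langle\mathbf{S},F\rangle$ with $\mathbf{S}$ a unital meet semilattice and $F\subseteq\mathbf{S}$. A homomorphism $h\colon\langle\mathbf{A},F\rangle\to\langle\mathbf{B},G\rangle$ is strict if $F=h^{-1}[G]$. A logical class is a class of structures closed under isomorphism, substructures $\langle\mathbf{B},F\cap\mathbf{B}\rangle$, products $\langle\prod\mathbf{A}_i,\prod F_i\rangle$, strict homomorphic preimages and strict homomorphic images (along surjective strict homomorphisms). For a set $X$, $Y\subseteq_nX$ means $Y$ non-empty, $Y\subseteq X$, $|Y|\le n$. An $n$-filter is an upset $F$ such that for every non-empty finite $X\subseteq F$, if $\bigwedge Y\in F$ for all $Y\subseteq_nX$ then $\bigwedge X\in F$. $\mathsf{uSL}_n$ is the class of all $\langle\mathbf{S},F\rangle$ with $F$ a non-empty $n$-filter, and $\mathsf{uSL}_\infty$ the class with $F$ a non-empty upset. *)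

(* Defs.v *)
From Stdlib Require Import List FunctionalExtensionality ProofIrrelevance.
From mathcomp Require Import all_boot.

Set Implicit Arguments.
Unset Strict Implicit.
Unset Printing Implicit Defensive.

Record uSL := USL {
  car : Type;
  meet : car -> car -> car;
  top : car;
  meetA : forall x y z, meet x (meet y z) = meet (meet x y) z;
  meetC : forall x y, meet x y = meet y x;
  meetI : forall x, meet x x = x;
  meetT : forall x, meet x top = x }.

Record Str := MkStr { alg : uSL; filt : car alg -> Prop }.
Arguments filt : clear implicits.
Arguments MkStr : clear implicits.

Definition is_hom (A B : uSL) (h : car A -> car B) : Prop :=
  (forall x y, h (meet x y) = meet (h x) (h y)) /\ h (top A) = top B.

Definition strict_hom (A B : Str) (h : car (alg A) -> car (alg B)) : Prop :=
  is_hom h /\ forall x, filt A x <-> filt B (h x).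

Definition str_iso (A B : Str) : Prop :=
  exists (h : car (alg A) -> car (alg B)) (g : car (alg B) -> car (alg A)),
    @strict_hom A B h /\ (forall x, g (h x) = x) /\ (forall y, h (g y) = y).

Section Sub.
Variables (A : uSL) (P : car A -> Prop)
  (HM : forall x y, P x -> P y -> P (meet x y)) (HT : P (top A)).

Definition sub_meet (x y : {x | P x}) : {x | P x} :=
  exist P (meet (proj1_sig x) (proj1_sig y)) (HM (proj2_sig x) (proj2_sig y)).

Definition sub_uSL : uSL.
Proof.
refine (@USL {x | P x} sub_meet (exist P (top A) HT) _ _ _ _);
  intros; repeat match goal with x : sig _ |- _ => destruct x end;
  apply ProofIrrelevanceTheory.subset_eq_compat; simpl.
- apply meetA.
- apply meetC.
- apply meetI.
- apply meetT.
Defined.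
End Sub.

Definition substr (S : Str) (P : car (alg S) -> Prop)
  (HM : forall x y, P x -> P y -> P (meet x y)) (HT : P (top (alg S))) : Str :=
  MkStr (sub_uSL HM HT) (fun x => filt S (proj1_sig x)).

Definition prod_uSL (I : Type) (A : I -> uSL) : uSL.
Proof.
refine (@USL (forall i, car (A i)) (fun x y i => meet (x i) (y i))
               (fun i => top (A i)) _ _ _ _);
  intros; apply functional_extensionality_dep; intro i.
- apply meetA.
- apply meetC.
- apply meetI.
- apply meetT.
Defined.

Definition prodstr (I : Type) (S : I -> Str) : Str :=
  MkStr (prod_uSL (fun i => alg (S i))) (fun x => forall i, filt (S i) (x i)).

Definition logical_class (C : Str -> Prop) : Prop :=
  (forall A B, str_iso A B -> C A -> C B) /\
  (forall S (P : car (alg S) -> Prop)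
     (HM : forall x y, P x -> P y -> P (meet x y)) (HT : P (top (alg S))),
     C S -> C (substr HM HT)) /\
  (forall (I : Type) (S : I -> Str), (forall i, C (S i)) -> C (prodstr S)) /\
  (forall A B (h : car (alg A) -> car (alg B)), @strict_hom A B h -> C B -> C A) /\
  (forall A B (h : car (alg A) -> car (alg B)),
     @strict_hom A B h -> (forall y, exists x, h x = y) -> C A -> C B).

Definition generated (K : Str -> Prop) (A : Str) : Prop :=
  forall C, logical_class C -> (forall B, K B -> C B) -> C A.

Definition sl_le (A : uSL) (x y : car A) : Prop := meet x y = x.

Definition upset (A : uSL) (F : car A -> Prop) : Prop :=
  forall x y, F x -> sl_le x y -> F y.

Definition bigmeet (A : uSL) (X : list (car A)) : car A := fold_right (@meet A) (top A) X.

(** Finite sets are represented by lists (duplicates are harmless since meet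
    is idempotent, commutative and associative). *)
Definition nfilter (n : nat) (A : uSL) (F : car A -> Prop) : Prop :=
  upset F /\
  forall X : list (car A), X <> nil -> (forall x, List.In x X -> F x) ->
    (forall Y : list (car A), Y <> nil -> (forall y, List.In y Y -> List.In y X) ->
        (length Y <= n)%coq_nat -> F (bigmeet Y)) ->
    F (bigmeet X).

Definition uSLn (n : nat) (S : Str) : Prop :=
  (exists x, filt S x) /\ nfilter n (filt S).

Definition uSLinf (S : Str) : Prop :=
  (exists x, filt S x) /\ upset (filt S).

Definition two_n (n : nat) : uSL :=
  @USL {set 'I_n} (@setI _) setT (@setIA _) (@setIC _) (@setIid _) (@setIT _).

Definition Bn (n : nat) : Str := MkStr (two_n n) (fun A : {set 'I_n} => A != set0).

(* Main.v *)
Require Import Defs.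
From Stdlib Require Import List FunctionalExtensionality ProofIrrelevance PropExtensionality ClassicalEpsilon Classical.
From mathcomp Require Import all_boot.

Set Implicit Arguments.
Unset Strict Implicit.

Section Order.
Variable A : uSL.
Implicit Types x y z : car A.

Lemma le_refl x : sl_le x x.
Proof. exact: meetI. Qed.

Lemma le_trans x y z : sl_le x y -> sl_le y z -> sl_le x z.
Proof.
rewrite /sl_le => Hxy Hyz. rewrite -{1}Hxy -meetA Hyz. exact Hxy.
Qed.

Lemma le_antisym x y : sl_le x y -> sl_le y x -> x = y.
Proof. rewrite /sl_le => H1 H2. by rewrite -H1 meetC H2. Qed.

Lemma le_meetl x y : sl_le (meet x y) x.
Proof. by rewrite /sl_le meetC meetA meetI. Qed.

Lemma le_meetr x y : sl_le (meet x y) y.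
Proof. by rewrite /sl_le -meetA meetI. Qed.

Lemma le_meet x y z : sl_le z x -> sl_le z y -> sl_le z (meet x y).
Proof. rewrite /sl_le => H1 H2. by rewrite meetA H1 H2. Qed.

Lemma le_top x : sl_le x (top A).
Proof. exact: meetT. Qed.

Lemma bm_lb (l : list (car A)) x : List.In x l -> sl_le (bigmeet l) x.
Proof.
elim: l => [|a l IH] //= [<-|H]; first exact: le_meetl.
exact: le_trans (le_meetr _ _) (IH H).
Qed.

Lemma bm_glb (l : list (car A)) z :
  (forall x, List.In x l -> sl_le z x) -> sl_le z (bigmeet l).
Proof.
elim: l => [|a l IH] H /=; first exact: le_top.
apply: le_meet; first by apply: H; left.
apply: IH => x Hx; apply: H; by right.
Qed.

Lemma bm_eq (l l' : list (car A)) :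
  (forall x, List.In x l <-> List.In x l') -> bigmeet l = bigmeet l'.
Proof.
move=> H; apply: le_antisym; apply: bm_glb => x Hx; apply: bm_lb; by apply/H.
Qed.

Lemma bm_app (l1 l2 : list (car A)) :
  bigmeet (l1 ++ l2) = meet (bigmeet l1) (bigmeet l2).
Proof.
elim: l1 => [|a l IH] /=; first by rewrite meetC meetT.
by rewrite IH meetA.
Qed.

Lemma top_in (F : car A -> Prop) : (exists x, F x) -> upset F -> F (top A).
Proof. move=> [x Fx] U. exact: U Fx (le_top x). Qed.

End Order.

Lemma bm_hom (A B : uSL) (h : car A -> car B) (l : list (car A)) :
  is_hom h -> h (bigmeet l) = bigmeet (List.map h l).
Proof.
move=> [Hm Ht]; elim: l => [|a l IH] //=. by rewrite Hm IH.
Qed.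

Lemma lift (T U : Type) (h : T -> U) (X : list T) (Y : list U) :
  (forall y, List.In y Y -> List.In y (List.map h X)) ->
  exists Y', List.map h Y' = Y /\ forall y, List.In y Y' -> List.In y X.
Proof.
elim: Y => [|y Y IH] H; first by exists nil.
have [x [hx Hx]] : exists x, h x = y /\ List.In x X.
  apply/List.in_map_iff; apply: H; by left.
have [Y' [E HY']] : exists Y', List.map h Y' = Y /\ forall y, List.In y Y' -> List.In y X.
  apply: IH => z Hz; apply: H; by right.
exists (x :: Y'); split; first by rewrite /= hx E.
move=> z [<-|Hz] //; exact: HY'.
Qed.

Lemma slift (T U : Type) (h : T -> U) (Y : list U) :
  (forall y, exists x, h x = y) -> exists Y', List.map h Y' = Y.
Proof.
move=> S; elim: Y => [|y Y [Y' E]]; first by exists nil.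
have [x hx] := S y. exists (x :: Y'); by rewrite /= hx E.
Qed.

Definition nclos (n : nat) (A : uSL) (F : car A -> Prop) : Prop :=
  forall X : list (car A), X <> nil -> (forall x, List.In x X -> F x) ->
    (forall Y : list (car A), Y <> nil -> (forall y, List.In y Y -> List.In y X) ->
        (length Y <= n)%coq_nat -> F (bigmeet Y)) ->
    F (bigmeet X).

Section Pre.
Variables (A B : Str) (h : car (alg A) -> car (alg B)).
Hypothesis Hh : strict_hom h.

Lemma upset_pre : upset (filt B) -> upset (filt A).
Proof.
case: Hh => [[Hm Ht] Hf] U x y Fx Hle.
apply/Hf; apply: (U (h x)); first exact/Hf.
by rewrite /sl_le -Hm Hle.
Qed.

Lemma ne_pre : (exists x, filt B x) -> upset (filt B) -> exists x, filt A x.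
Proof.
case: Hh => [[Hm Ht] Hf] Ne U. exists (top (alg A)); apply/Hf; rewrite Ht.
exact: top_in.
Qed.

Lemma nclos_pre n : nclos n (filt B) -> nclos n (filt A).
Proof.
case: Hh => [Hhom Hf] N X XN XF HY.
apply/Hf; rewrite (bm_hom _ Hhom); apply: N.
- by case: X XN XF HY.
- move=> y /List.in_map_iff [x [<- Hx]]; apply/Hf; exact: XF.
- move=> Y YN YX Yl; have [Y' [E HY']] := lift YX.
  have Y'N : Y' <> nil by move=> E'; apply: YN; rewrite -E E'.
  have Yl' : (length Y' <= n)%coq_nat by rewrite -E List.length_map in Yl.
  have := HY Y' Y'N HY' Yl' => /Hf.
  by rewrite (bm_hom _ Hhom) E.
Qed.
End Pre.

Section Img.
Variables (A B : Str) (h : car (alg A) -> car (alg B)).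
Hypothesis Hh : strict_hom h.
Hypothesis Hs : forall y, exists x, h x = y.

Lemma upset_img : upset (filt A) -> upset (filt B).
Proof.
case: Hh => [[Hm Ht] Hf] U y y' Fy Hle.
have [x hx] := Hs y; have [x' hx'] := Hs y'.
have F1 : filt A (meet x x').
  apply/Hf; rewrite Hm hx hx'; rewrite /sl_le in Hle; by rewrite Hle.
rewrite -hx'; apply/Hf; apply: U F1 _; exact: le_meetr.
Qed.

Lemma ne_img : (exists x, filt A x) -> exists x, filt B x.
Proof. case: Hh => [_ Hf] [x Fx]; exists (h x); exact/Hf. Qed.

Lemma nclos_img n : nclos n (filt A) -> nclos n (filt B).
Proof.
case: Hh => [Hhom Hf] N X XN XF HY.
have [X' E] := slift X Hs.
rewrite -E -(bm_hom _ Hhom); apply/Hf; apply: N.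
- by move=> E'; apply: XN; rewrite -E E'.
- move=> x Hx; apply/Hf; apply: XF; rewrite -E; exact: List.in_map.
- move=> Y' YN YX Yl; apply/Hf; rewrite (bm_hom _ Hhom); apply: HY.
  + by case: Y' YN {YX Yl}.
  + move=> y /List.in_map_iff [x [<- Hx]]; rewrite -E; apply: List.in_map; exact: YX.
  + by rewrite List.length_map.
Qed.
End Img.

Section Prod.
Variables (I : Type) (S : I -> Str).

Lemma ev_hom (i : I) : @is_hom (alg (prodstr S)) (alg (S i)) (fun x => x i).
Proof. by split. Qed.

Lemma upset_prod : (forall i, upset (filt (S i))) -> upset (filt (prodstr S)).
Proof.
move=> U x y Fx Hle i; apply: (U i (x i)); first exact: Fx.
rewrite /sl_le in Hle *. exact: (f_equal (fun f => f i) Hle).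
Qed.

Lemma ne_prod : (forall i, (exists x, filt (S i) x) /\ upset (filt (S i))) ->
  exists x, filt (prodstr S) x.
Proof.
move=> H; exists (top (alg (prodstr S))) => i /=.
case: (H i) => N U; exact: (top_in N U).
Qed.

Lemma nclos_prod n : (forall i, nclos n (filt (S i))) -> nclos n (filt (prodstr S)).
Proof.
move=> N X XN XF HY i.
have E := bm_hom X (ev_hom i); simpl in E; rewrite E.
apply: N.
- by case: X XN XF HY E.
- move=> y /List.in_map_iff [x [<- Hx]]; exact: XF.
- move=> Y YN YX Yl; have [Y' [E' HY']] := lift YX.
  have Y'N : Y' <> nil by move=> E''; apply: YN; rewrite -E' E''.
  have Yl' : (length Y' <= n)%coq_nat by rewrite -E' List.length_map in Yl.
  have := HY Y' Y'N HY' Yl' i.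
  have E2 := bm_hom (A:=alg (prodstr S)) Y' (ev_hom i); simpl in E2; by rewrite E2 E'.
Qed.
End Prod.
Lemma mk_logical (Q : Str -> Prop) :
  (forall A B (h : car (alg A) -> car (alg B)), strict_hom h -> Q B -> Q A) ->
  (forall A B (h : car (alg A) -> car (alg B)), strict_hom h ->
     (forall y, exists x, h x = y) -> Q A -> Q B) ->
  (forall (I : Type) (S : I -> Str), (forall i, Q (S i)) -> Q (prodstr S)) ->
  logical_class Q.
Proof.
move=> Hpre Himg Hprod; split; [|split; [|split; [|split]]] => //.
- move=> A B [h [g [Hh [_ hg]]]]; apply: Himg Hh _ => y; by exists (g y).
- move=> S P HM HT; apply: (Hpre _ _ (fun x : car (alg (substr HM HT)) => proj1_sig x)).
  by split.
Qed.

Lemma logical_inf : logical_class uSLinf.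
Proof.
apply: mk_logical.
- move=> A B h Hh [N U]; split; [exact: ne_pre Hh N U | exact: upset_pre Hh U].
- move=> A B h Hh Hs [N U]; split; [exact: ne_img Hh N | exact: upset_img Hh Hs U].
- move=> I S H; split; [exact: ne_prod H | apply: upset_prod => i; exact: (H i).2].
Qed.

Lemma logical_n n : logical_class (uSLn n).
Proof.
apply: mk_logical.
- move=> A B h Hh [N [U C]]; split; first exact: ne_pre Hh N U.
  split; [exact: upset_pre Hh U | idtac].
  exact: (@nclos_pre A B h Hh n C).
- move=> A B h Hh Hs [N [U C]]; split; first exact: ne_img Hh N.
  split; [exact: upset_img Hh Hs U | exact: (@nclos_img A B h Hh Hs n C)].
- move=> I S H; split.
  + apply: ne_prod => i; case: (H i) => N [U _]; by split.
  + split; [apply: upset_prod => i; exact: (H i).2.1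
           | apply: nclos_prod => i; exact: (H i).2.2].
Qed.

Lemma length_size (T : Type) (s : list T) : length s = size s.
Proof. by elim: s => //= a s ->. Qed.

Lemma In_mem (T : eqType) (x : T) (s : seq T) : x \in s -> List.In x s.
Proof. elim: s => [|a s IH] //=; rewrite inE => /orP [/eqP ->|H]; [by left|right; exact: IH]. Qed.

Lemma bm_set n (X : list {set 'I_n}) (i : 'I_n) :
  i \in (bigmeet (A:=two_n n) X) <-> forall x, List.In x X -> i \in x.
Proof.
elim: X => [|a X IH] /=; first by split => // _; rewrite inE.
rewrite inE; split.
- move=> /andP [Ha /IH H] x [<-|Hx] //; exact: H.
- move=> H; apply/andP; split; first by apply: H; left.
  apply/IH => x Hx; apply: H; by right.
Qed.

Lemma upset_Bn n : upset (filt (Bn n)).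
Proof.
move=> x y /= Hx; rewrite /sl_le /= => Hle; apply/negP => /eqP Hy.
move: Hle; rewrite Hy setI0 => E; by rewrite -E eqxx in Hx.
Qed.

Lemma ne_Bn n : (1 <= n)%coq_nat -> exists x, filt (Bn n) x.
Proof.
move=> Hn; exists (setT : {set 'I_n}) => /=; apply/set0Pn.
have Hn' : 0 < n by apply/leP.
exists (Ordinal Hn'); by rewrite inE.
Qed.

Lemma nclos_Bn n : (1 <= n)%coq_nat -> nclos n (filt (Bn n)).
Proof.
move=> Hn X XN XF HY; apply: NNPP => /negP; rewrite negbK => /eqP E.
have W : forall i : 'I_n, exists x, List.In x X /\ i \notin x.
  move=> i; apply: NNPP => H.
  have : i \in (bigmeet (A:=two_n n) X).
    apply/bm_set => x Hx; apply: NNPP => /negP Hi; apply: H; by exists x.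
  by rewrite /= E inE.
pose w i := proj1_sig (constructive_indefinite_description _ (W i)).
have Hw i : List.In (w i) X /\ i \notin w i.
  exact: proj2_sig (constructive_indefinite_description _ (W i)).
have Hn' : 0 < n by apply/leP.
have := HY (List.map w (enum 'I_n)).
have /negP : ~~ (bigmeet (A:=two_n n) (List.map w (enum 'I_n)) != set0).
  rewrite negbK; apply/eqP/setP => i; rewrite inE; apply/negP => /bm_set H.
  have := (Hw i).2; rewrite H //; apply: List.in_map; apply: In_mem; by rewrite mem_enum.
move=> Hneg H; apply: Hneg; apply: H.
- have : List.In (Ordinal Hn') (enum 'I_n) by apply: In_mem; rewrite mem_enum.
  by case: (enum 'I_n) => //.
- move=> y /List.in_map_iff [i [<- _]]; exact: (Hw i).1.
- rewrite List.length_map length_size; apply/leP; by rewrite size_enum_ord.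
Qed.

Lemma Bn_n n : (1 <= n)%coq_nat -> uSLn n (Bn n).
Proof. move=> Hn; split; [exact: ne_Bn|split; [exact: upset_Bn|exact: nclos_Bn]]. Qed.

Lemma Bn_inf n : (1 <= n)%coq_nat -> uSLinf (Bn n).
Proof. move=> Hn; split; [exact: ne_Bn|exact: upset_Bn]. Qed.

Definition pow_uSL (T : Type) : uSL.
Proof.
refine (@USL (T -> Prop) (fun P Q x => P x \/ Q x) (fun _ => False) _ _ _ _);
  intros; apply: functional_extensionality => t;
  apply: propositional_extensionality; tauto.
Defined.

Definition decb (P : Prop) : bool := if excluded_middle_informative P then true else false.

Lemma decbP (P : Prop) : reflect P (decb P).
Proof. rewrite /decb; case: excluded_middle_informative => H; by constructor. Qed.

Section Embed.
Variable S : Str.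
Let T := car (alg S).

Definition finp (P : car (pow_uSL T)) := exists l : list T, forall x, P x <-> List.In x l.

Lemma finU : forall x y : car (pow_uSL T), finp x -> finp y -> finp (meet x y).
Proof.
move=> x y [l1 H1] [l2 H2]; exists (l1 ++ l2) => t /=.
rewrite List.in_app_iff; by rewrite H1 H2.
Qed.

Lemma fin0 : finp (top (pow_uSL T)).
Proof. by exists nil. Qed.

Definition FA : uSL := sub_uSL finU fin0.

Definition hF (P : car FA) : T :=
  bigmeet (proj1_sig (constructive_indefinite_description _ (proj2_sig P))).

Lemma hFE (P : car FA) l : (forall x, proj1_sig P x <-> List.In x l) -> hF P = bigmeet l.
Proof.
move=> H; rewrite /hF; case: constructive_indefinite_description => l' H' /=.
apply: bm_eq => x; rewrite -H'; exact: H.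
Qed.

Lemma hF_hom : is_hom hF.
Proof.
split.
- move=> [P [l1 H1]] [Q [l2 H2]].
  rewrite (@hFE (exist _ P (ex_intro _ l1 H1)) l1) //.
  rewrite (@hFE (exist _ Q (ex_intro _ l2 H2)) l2) //.
  rewrite -bm_app; apply: hFE => x /=; rewrite List.in_app_iff; by rewrite H1 H2.
- rewrite (@hFE _ nil) //.
Qed.

Lemma hF_surj : forall y, exists x, hF x = y.
Proof.
move=> y.
have Hf : finp (fun x => x = y) by exists (y :: nil) => x /=; split; [left|case] => //.
exists (exist _ _ Hf); rewrite (@hFE _ (y :: nil)) /=; first exact: meetT.
move=> x; split; [by left|by case].
Qed.

Variable N : nat -> Prop.

Definition J := {p : {m : nat & 'I_m -> T} |
   N (projT1 p) /\ forall z, (forall i, sl_le z (projT2 p i)) -> ~ filt S z}.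

Definition PB := prodstr (fun j : J => Bn (projT1 (proj1_sig j))).

Definition eF (P : car FA) : car (alg PB) :=
  fun j => [set i : 'I_(projT1 (proj1_sig j)) | ~~ decb (proj1_sig P (projT2 (proj1_sig j) i))].

Definition SA := MkStr FA (fun P => filt S (hF P)).

Hypothesis Ne : exists x, filt S x.
Hypothesis U : upset (filt S).
Hypothesis Hyp : forall l : list T, l <> nil -> ~ filt S (bigmeet l) ->
  exists m (y : 'I_m -> T), N m /\ (forall i, List.In (y i) l) /\
     (forall z, (forall i, sl_le z (y i)) -> ~ filt S z).

Lemma eF_strict : @strict_hom SA PB eF.
Proof.
split; first split.
- move=> P Q; apply: functional_extensionality_dep => j /=.
  apply/setP => i; rewrite !inE.
  case: (decbP (proj1_sig P _)) => HP; case: (decbP (proj1_sig Q _)) => HQ;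
  case: (decbP (_ \/ _)) => //; tauto.
- apply: functional_extensionality_dep => j /=.
  apply/setP => i; rewrite !inE; by case: decbP.
- move=> P; split.
  + move=> HF j /=; apply/set0Pn; apply: NNPP => Hn.
    case: j Hn => [[m y] [Nm Hz]] /= Hn.
    apply: (Hz (hF P)) => // i.
    have : proj1_sig P (y i).
      apply/decbP; apply: NNPP => /negP H; apply: Hn; exists i; by rewrite inE.
    rewrite /hF; case: constructive_indefinite_description => l Hl /= Hy.
    apply: bm_lb; exact/Hl.
  + move=> He /=; apply: NNPP => HF.
    move: HF; rewrite /hF; case: constructive_indefinite_description => l Hl /= HF.
    case: l Hl HF => [|a l] Hl HF.
      by apply: HF; exact: top_in Ne U.
    have [m [y [Nm [Hin Hz]]]] := Hyp (l:=a :: l) (fun E => ltac:(discriminate)) HF.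
    have /set0Pn [i] := He (exist _ (existT _ m y) (conj Nm Hz)).
    rewrite inE /= => /negP; apply; apply/decbP; apply/Hl; exact: Hin.
Qed.

Lemma hF_strict : @strict_hom SA S hF.
Proof. split; [exact: hF_hom|by []]. Qed.

Lemma embed (C : Str -> Prop) : logical_class C ->
  (forall m, N m -> C (Bn m)) -> C S.
Proof.
move=> [_ [_ [Hprod [Hpre Himg]]]] HB.
apply: (Himg SA S hF hF_strict hF_surj).
apply: (Hpre SA PB eF eF_strict).
apply: Hprod => j; apply: HB; exact: (proj2_sig j).1.
Qed.
End Embed.

From Stdlib Require Import Lia.

Lemma glb_nth (A : uSL) (Y : list (car A)) d m z :
  (length Y <= m)%coq_nat ->
  (forall i : 'I_m, sl_le z (List.nth i Y d)) -> sl_le z (bigmeet Y).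
Proof.
move=> Hl H; apply: bm_glb => x /(List.In_nth _ _ d) [k [Hk <-]].
have Hk' : k < m by apply/ltP; lia.
exact: (H (Ordinal Hk')).
Qed.

Lemma in_nth (T : Type) (Y : list T) d m (i : 'I_m) :
  List.In d Y -> List.In (List.nth i Y d) Y.
Proof.
move=> Hd; case: (PeanoNat.Nat.lt_ge_cases i (length Y)) => H.
- exact: List.nth_In.
- by rewrite List.nth_overflow.
Qed.

Theorem mainTheorem14 :
  (forall n : nat, (1 <= n)%coq_nat ->
     forall S : Str, uSLn n S <-> generated (fun B => B = Bn n) S) /\
  (forall S : Str,
     uSLinf S <-> generated (fun B => exists n, (1 <= n)%coq_nat /\ B = Bn n) S).
Proof.
split.
- move=> n Hn S; split.
  + move=> [Ne [U Cl]] C HC HK.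
    apply: (@embed S (fun m => m = n) Ne U) => //; last by move=> m ->; apply: HK.
    move=> l lN HF.
    have Hn' : 0 < n by apply/leP.
    case: (classic (exists x, List.In x l /\ ~ filt S x)) => [[x [Hx Fx]]|Hall].
      exists n, (fun _ => x); split => //; split => // z Hz Fz.
      apply: Fx; exact: U Fz (Hz (Ordinal Hn')).
    have Hl : forall x, List.In x l -> filt S x.
      move=> x Hx; apply: NNPP => Fx; apply: Hall; by exists x.
    have [Y HY] : exists Y, ~ (Y <> nil -> (forall y, List.In y Y -> List.In y l) ->
        (length Y <= n)%coq_nat -> filt S (bigmeet Y)).
      apply: NNPP => H; apply: HF; apply: (Cl l lN Hl) => Y.
      apply: NNPP => H'; apply: H; by exists Y.
    have [YN [YX [Yl YF]]] : Y <> nil /\ (forall y, List.In y Y -> List.In y l) /\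
        (length Y <= n)%coq_nat /\ ~ filt S (bigmeet Y) by tauto.
    case: Y YN YX Yl YF {HY} => [//|d Y'] _ YX Yl YF.
    exists n, (fun i => List.nth i (d :: Y') d); split => //; split.
      move=> i; apply: YX; apply: in_nth; by left.
    move=> z Hz Fz; apply: YF; apply: U Fz _; exact: glb_nth Yl Hz.
  + move=> HG; apply: HG; first exact: logical_n.
    by move=> B ->; apply: Bn_n.
- move=> S; split.
  + move=> [Ne U] C HC HK.
    apply: (@embed S (fun m => (1 <= m)%coq_nat) Ne U) => //; last first.
      move=> m Hm; apply: HK; by exists m.
    move=> [//|d l'] _ HF.
    exists (length (d :: l')), (fun i => List.nth i (d :: l') d); split.
      simpl; lia.
    split; first by move=> i; apply: in_nth; left.
    move=> z Hz Fz; apply: HF; apply: U Fz _; exact: glb_nth (le_n _) Hz.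
  + move=> HG; apply: HG; first exact: logical_inf.
    by move=> B [m [Hm ->]]; apply: Bn_inf.
Qed.
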